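(* Let $N\geq4$, $z\in\mathbb{C}\setminus\{0\}$, and let $|X_N(z)\rangle=|1\rangle^{\otimes N}+z^{N-1}\sqrt N\,|W_N\rangle$, where $|W_N\rangle=\frac{1}{\sqrt N}\left(|10\cdots0\rangle+|010\cdots0\rangle+\cdots+|0\cdots01\rangle\right)$. Then $|X_N(z)\rangle=\frac{1}{N-1}\sum_{k=1}^{N-1}|x_k\rangle^{\otimes N}$ with $|x_k\rangle=|1\rangle+e^{2\pi i(k-1)/(N-1)}z|0\rangle$, and $D(X_N(z))=N-1$.
   Context: The one-qubit space is $\mathbb{C}^2$ with standard basis $\{|0\rangle,|1\rangle\}$; $\mathrm{Sym}_N\subset(\mathbb{C}^2)^{\otimes N}$ is the symmetric subspace. For a nonzero $|\psi\rangle\in\mathrm{Sym}_N$, the optimal bond dimension $D(\psi)$ is the minimal integer $D\geq1$ such that $|\psi\rangle=\sum_{k=1}^D|x_k\rangle^{\otimes N}$ for some (not necessarily normalized) vectors $|x_k\rangle\in\mathbb{C}^2$. *)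

(* Defs.v *)
(* Complex numbers are modelled by an arbitrary
   numClosedFieldType C (e.g. algC). *)
From HB Require Import structures.
From mathcomp Require Import all_boot all_order all_algebra.
Set Implicit Arguments. Unset Strict Implicit. Unset Printing Implicit Defensive.
Import Order.TTheory GRing.Theory Num.Theory.
Local Open Scope ring_scope.

(* A one-qubit vector: x false = coefficient of |0>, x true = coefficient of |1>. *)
Definition qubit (C : numClosedFieldType) := {ffun bool -> C}.

(* Basis labels of (C^2)^{⊗N}: bit strings s : 'I_N -> bool (true = |1>). *)
Definition bits (N : nat) := {ffun 'I_N -> bool}.

Definition nqubit (C : numClosedFieldType) (N : nat) := {ffun bits N -> C^o}.

Definition ket (C : numClosedFieldType) (N : nat) (s : bits N) : nqubit C N :=
  [ffun t => (t == s)%:R].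

Definition tpow (C : numClosedFieldType) (N : nat) (x : qubit C) : nqubit C N :=
  [ffun s : bits N => \prod_(i < N) x (s i)].

Definition sum_of_tpows (C : numClosedFieldType) (N : nat) (psi : nqubit C N)
  (D : nat) : Prop :=
  exists xs : 'I_D -> qubit C, psi = \sum_(k < D) tpow N (xs k).

Definition optimal_bond_dim (C : numClosedFieldType) (N : nat)
  (psi : nqubit C N) (D : nat) : Prop :=
  [/\ (1 <= D)%N, sum_of_tpows psi D &
      forall D', (1 <= D')%N -> sum_of_tpows psi D' -> (D <= D')%N].

Definition all_ones (C : numClosedFieldType) (N : nat) : nqubit C N :=
  ket C [ffun _ => true].

Definition W_state (C : numClosedFieldType) (N : nat) : nqubit C N :=
  (sqrtC (N%:R : C))^-1 *: \sum_(i < N) ket C [ffun j => j == i].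

Definition X_state (C : numClosedFieldType) (N : nat) (z : C) : nqubit C N :=
  all_ones C N + (z ^+ N.-1 * sqrtC (N%:R : C)) *: W_state C N.

(* e^{2 pi i / n}: the square of n.-root (-1) = e^{i pi / n}. *)
Definition omega (C : numClosedFieldType) (n : nat) : C := (n.-root (-1 : C)) ^+ 2.

(* |x_k> = |1> + e^{2 pi i (k-1)/(N-1)} z |0>, indexed here by k-1 = 0..N-2. *)
Definition x_vec (C : numClosedFieldType) (N : nat) (z : C) (k : nat) : qubit C :=
  [ffun b : bool => if b then 1 else omega C N.-1 ^+ k * z].

(* Main.v *)
Require Import Defs.
From HB Require Import structures.
From mathcomp Require Import all_boot all_order all_algebra.
Import Order.TTheory GRing.Theory Num.Theory.
Local Open Scope ring_scope.
From mathcomp Require Import cyclic separable cyclotomic.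
From mathcomp Require Import zify ring.
Set Implicit Arguments. Unset Strict Implicit. Unset Printing Implicit Defensive.
Lemma dvd_aux g' e0 j l : (l < g'.+1)%N ->
  (g'.+1 %| e0 + j + g' * l)%N = (l == (e0 + j) %% g'.+1)%N.
Proof.
move=> lg.
have E : (e0 + j + g' * l + l = (e0 + j) + l * g'.+1)%N by rewrite mulnS; lia.
rewrite /dvdn -[0%N](mod0n g'.+1) -(eqn_modDr l) E addnC modnMDl add0n.
by rewrite (modn_small lg) eq_sym.
Qed.

Section Roots.
Variable C : numClosedFieldType.

Lemma norm1_conj (x : C) n : (0 < n)%N -> `|x ^+ n| = 1 -> x * x^* = 1.
Proof.
move=> n0; rewrite normrX => H.
have : `|x| = 1 by apply/eqP; rewrite -(pexpr_eq1 n0 (normr_ge0 x)) H.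
by rewrite -normCK => ->; rewrite expr1n.
Qed.

Lemma sum_if_eq (F : nat -> C) n L : (L < n)%N ->
  \sum_(l < n) (if (l == L :> nat) then F l else 0) = F L.
Proof.
move=> Ln; rewrite (bigD1 (Ordinal Ln)) //= eqxx big1 ?addr0 // => l.
by rewrite -val_eqE /= => /negbTE ->.
Qed.

Lemma prim_exists (g : nat) : (0 < g)%N -> exists u : C, g.-primitive_root u.
Proof.
pose p : {poly C} := 'X^g - 1; have [r Dp] := closed_field_poly_normal p.
move=> n_gt0; rewrite (monicP _) ?monicXnsubC // scale1r in Dp.
have rn1: all g.-unity_root r by apply/allP=> z; rewrite -root_prod_XsubC -Dp.
have sz_r: (g < (size r).+1)%N.
  by rewrite -(size_prod_XsubC r id) -Dp size_XnsubC.
have [|z] := hasP (has_prim_root n_gt0 rn1 _ sz_r); last by exists z.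
by rewrite -separable_prod_XsubC -Dp separable_Xn_sub_1 // pnatr_eq0 -lt0n.
Qed.

Lemma geo_sum (v : C) (g : nat) : v ^+ g = 1 ->
  \sum_(i < g) v ^+ i = if v == 1 then g%:R else 0.
Proof.
move=> vg; case: eqP => [->|/eqP v1].
  by rewrite (eq_bigr (fun _ => 1)) ?sumr_const ?card_ord // => i _; rewrite expr1n.
apply/eqP; rewrite -(mulrI_eq0 _ (lregP (x := v - 1) _)) ?subr_eq0 //.
by rewrite -subrX1 vg subrr.
Qed.


Lemma better_root (g : nat) (w : C) : (1 < g)%N -> `|w| = 1 -> w != 1 ->
  exists s : C, s ^+ g = w /\ 'Re w < 'Re s.
Proof.
case: g => [//|g'] g1 nw w1; set g := g'.+1.
have [u pu] := prim_exists (ltn0Sn g').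
set s0 := g.-root w.
have s0g : s0 ^+ g = w by rewrite /s0 rootCK.
have us : u * u^* = 1 by apply: (norm1_conj (ltn0Sn g')); rewrite (prim_expr_order pu) normr1.
have s0s : s0 * s0^* = 1 by apply: (norm1_conj (ltn0Sn g')); rewrite s0g.
have uc : u^* = u ^+ g'.
  by rewrite -[u^*]mulr1 -(prim_expr_order pu) exprS mulrA (mulrC _ u) us mul1r.
pose sg (i : nat) := s0 * u ^+ i.
have key m l : \sum_(i < g) sg i ^+ m * (sg i)^* ^+ l =
   s0 ^+ m * s0^* ^+ l * (if (g %| m + g' * l)%N then g%:R else 0).
  transitivity (\sum_(i < g) s0 ^+ m * s0^* ^+ l * (u ^+ (m + g' * l)) ^+ i).
    apply: eq_bigr => i _.
    have cc : (s0 * u ^+ i)^* = s0^* * (u ^+ g') ^+ i by rewrite -uc rmorphM rmorphXn.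
    rewrite /sg cc !exprMn -!exprM.
    have -> : ((m + g' * l) * i = i * m + g' * i * l)%N by ring.
    rewrite exprD; ring.
  rewrite -mulr_sumr geo_sum; last by rewrite -exprM mulnC exprM (prim_expr_order pu) expr1n.
  by rewrite -(prim_order_dvd pu).
pose S (i : nat) := \sum_(j < g) sg i ^+ j.
have SS i : S i * (S i)^* = \sum_(j < g) \sum_(l < g) sg i ^+ j * (sg i)^* ^+ l.
  rewrite /S rmorph_sum mulr_suml; apply: eq_bigr => j _.
  by rewrite mulr_sumr; apply: eq_bigr => l _; rewrite rmorphXn.
have K e : \sum_(i < g) sg i ^+ e * (S i * (S i)^*) =
   \sum_(j < g) \sum_(l < g) (if (l == ((e + j) %% g)%N :> nat) then
        s0 ^+ (e + j)%N * s0^* ^+ l * g%:R else 0).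
  under eq_bigr do rewrite SS mulr_sumr.
  under eq_bigr do under eq_bigr do rewrite mulr_sumr.
  rewrite exchange_big; apply: eq_bigr => j _.
  rewrite exchange_big; apply: eq_bigr => l _.
  rewrite -dvd_aux //.
  transitivity (s0 ^+ (e + j)%N * s0^* ^+ l * (if (g %| (e + j) + g' * l)%N then g%:R else 0)).
    rewrite -key; apply: eq_bigr => i _.
    by rewrite mulrA -exprD.
  by case: ifP; rewrite ?mulr0.
have K0 : \sum_(i < g) S i * (S i)^* = g%:R * g%:R.
  transitivity (\sum_(i < g) sg i ^+ 0 * (S i * (S i)^* )).
    by apply: eq_bigr => i _; rewrite expr0 mul1r.
  rewrite K; transitivity (\sum_(j < g) (g%:R : C)); last first.
    by rewrite sumr_const card_ord mulr_natl.
  apply: eq_bigr => j _; rewrite add0n modn_small //.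
  rewrite (sum_if_eq (fun l : nat => s0 ^+ j * s0^* ^+ l * g%:R)) //.
  by rewrite -exprMn s0s expr1n mul1r.
have K1 : \sum_(i < g) sg i * (S i * (S i)^* ) = g'%:R * g%:R + w * g%:R.
  transitivity (\sum_(i < g) sg i ^+ 1 * (S i * (S i)^* )).
    by apply: eq_bigr => i _; rewrite expr1.
  rewrite K big_ord_recr /= add1n modnn.
  rewrite (sum_if_eq (fun l : nat => s0 ^+ g'.+1 * s0^* ^+ l * g%:R)) //.
  rewrite expr0 mulr1 s0g; congr (_ + _).
  transitivity (\sum_(i < g') (g%:R : C)); last by rewrite sumr_const card_ord mulr_natl.
  apply: eq_bigr => i _; rewrite add1n modn_small ?ltnS //.
  rewrite (sum_if_eq (fun l : nat => s0 ^+ i.+1 * s0^* ^+ l * g%:R)) ?ltnS //.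
  by rewrite -exprMn s0s expr1n mul1r.
have [i Hi|H] := pickP (fun i : 'I_g => 'Re w < 'Re (sg i)).
  exists (sg i); split => //.
  by rewrite /sg exprMn s0g -exprM mulnC exprM (prim_expr_order pu) expr1n mulr1.
have H' (i : 'I_g) : 'Re (sg i) <= 'Re w.
  by have := H i => /= /negbT; rewrite real_ltNge ?Creal_Re // negbK.
pose P (i : nat) := S i * (S i)^*.
have Preal i : P i \is Num.real by rewrite /P -normCK realX ?normr_real.
have T0 : 0 <= \sum_(i < g) ('Re w - 'Re (sg i)) * P i.
  apply: sumr_ge0 => i _; apply: mulr_ge0; first by rewrite subr_ge0.
  exact: mul_conjC_ge0.
have TE : \sum_(i < g) ('Re w - 'Re (sg i)) * P i = g%:R * g'%:R * ('Re w - 1).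
  transitivity ('Re w * \sum_(i < g) P i - 'Re (\sum_(i < g) sg i * P i)).
    rewrite raddf_sum mulr_sumr -sumrB; apply: eq_bigr => i _.
    by rewrite mulrBl; congr (_ - _); exact: esym (ReMr (Preal i) (sg i)).
  have ReE1 : 'Re (g'%:R * g%:R + w * g%:R) = g'%:R * g%:R + 'Re w * g%:R.
    have r3 : 'Re (g'%:R * g%:R + w * g%:R) = 'Re (g'%:R * g%:R) + 'Re (w * g%:R :> C).
      exact: raddfD.
    have r2 : 'Re (w * g%:R) = 'Re w * g%:R := ReMr (@realn C g) w.
    have r1 : 'Re (g'%:R * g%:R) = g'%:R * g%:R :> C.
      by apply/Creal_ReP; rewrite rpredM ?realn.
    by rewrite r3 r1 r2.
  rewrite /P K0 K1 ReE1.
  rewrite /g mulrSr; ring.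
have a1 : 'Re w - 1 < 0.
  rewrite subr_lt0 -nw (lt_leif (leif_Re_Creal w)).
  apply: contra w1 => w0; by rewrite -nw ger0_norm.
have : g%:R * g'%:R * ('Re w - 1) < 0 :> C.
  by rewrite pmulr_rlt0 // mulr_gt0 ?ltr0n.
move=> Hlt; exfalso; move: T0; by rewrite TE (lt_geF Hlt).
Qed.

Lemma neg1_neq1 : (-1 : C) != 1.
Proof. by rewrite eq_sym -addr_eq0 (_ : 1 + 1 = 2%:R) // pnatr_eq0. Qed.

Lemma omega_ok (n c : nat) : (1 < n)%N -> (0 < c < n)%N ->
  (n.-root (-1 : C)) ^+ 2 ^+ c != 1.
Proof.
move=> n1 Hc; set rho := n.-root (-1 : C).
have n0 : (0 < n)%N by apply: ltnW.
have rn : rho ^+ n = -1 by rewrite /rho rootCK.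
apply/negP => /eqP Hrc.
have [m /andP[Hm /eqP Hrm] Hmin] :
  {m | (0 < m < n)%N && (rho ^+ (2 * m) == 1) & forall k, (0 < k < n)%N && (rho ^+ (2 * k) == 1) -> (m <= k)%N}.
  apply: find_ex_minn; exists c; by rewrite Hc /= exprM Hrc eqxx.
have /andP[m0 mn] := Hm.
have Hsq : (rho ^+ m) ^+ 2 == 1 by rewrite -exprM mulnC Hrm.
set q := (n %/ m)%N; set r := (n %% m)%N.
have Hn : n = (q * m + r)%N by exact: divn_eq.
have rm : (r < m)%N by apply: ltn_pmod.
have rn' : (rho ^+ m) ^+ q * rho ^+ r = -1 by rewrite -exprM mulnC -exprD -Hn.
have r0 : r = 0%N.
  apply/eqP; apply: contraT => rnz.
  have : (m <= r)%N.
    apply: Hmin; rewrite lt0n rnz (ltn_trans rm mn) /=.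
    move: Hsq; rewrite sqrf_eq1 => /orP[] /eqP Hx; move: rn'; rewrite Hx.
      by rewrite expr1n mul1r mulnC exprM => ->; rewrite sqrrN expr1n.
    move=> Hq; have : ((-1) ^+ q * rho ^+ r) ^+ 2 = 1 by rewrite Hq sqrrN expr1n.
    by rewrite exprMn -exprM mulnC exprM sqrrN !expr1n mul1r mulnC exprM => ->.
  by rewrite leqNgt rm.
move: rn'; rewrite r0 expr0 mulr1 => Hq.
have Hx : rho ^+ m = -1.
  move: Hsq; rewrite sqrf_eq1 => /orP[] /eqP Hx //.
  by move: Hq; rewrite Hx expr1n => /eqP; rewrite eq_sym (negbTE neg1_neq1).
have q1 : (1 < q)%N.
  rewrite ltnNge; apply/negP => q1; move: mn; rewrite Hn r0 addn0.
  by case: (q) q1 => [|[|]] //; rewrite ?mul0n ?mul1n ?ltnn.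
have nr : `|rho| = 1.
  apply/eqP; rewrite -(pexpr_eq1 n0 (normr_ge0 _)) -normrX rn normrN normr1 //.
have r1 : rho != 1.
  by apply: contra neg1_neq1 => /eqP r1; rewrite -rn r1 expr1n.
have [s [sq Hs]] := better_root q1 nr r1.
have sn : s ^+ n = -1 by rewrite Hn r0 addn0 exprM sq Hx.
have [Hi|Hi] := real_ge0P (Creal_Im s).
  by have := le_lt_trans (rootC_Re_max n0 sn Hi) Hs; rewrite ltxx.
have sn' : (s^*) ^+ n = -1.
  by rewrite -rmorphXn sn rmorphN1.
have Hi' : 0 <= 'Im (s^*) by rewrite Im_conj oppr_ge0 ltW.
by have := le_lt_trans (rootC_Re_max n0 sn' Hi') Hs; rewrite Re_conj ltxx.
Qed.

End Roots.
Section Main.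
Variable C : numClosedFieldType.

Lemma tpowE N (x : qubit C) (s : bits N) :
  tpow N x s = x true ^+ #|[set i | s i]| * x false ^+ (N - #|[set i | s i]|).
Proof.
rewrite ffunE (bigID (fun i => s i)) /=.
have e1 : \prod_(i < N | s i) x (s i) = \prod_(i < N | s i) x true.
  by apply: eq_bigr => i ->.
have e2 : \prod_(i < N | ~~ s i) x (s i) = \prod_(i < N | ~~ s i) x false.
  by apply: eq_bigr => i /negbTE ->.
rewrite e1 e2.
rewrite !prodr_const; congr (_ ^+ _ * _ ^+ _).
  by apply: eq_card => i; rewrite inE.
have H := cardsC [set i | s i]; rewrite card_ord in H.
have -> : (N - #|[set i | s i]| = #|~: [set i | s i]|)%N by lia.
apply: eq_card => i; by rewrite !inE.
Qed.

Lemma eq_single N (s : bits N) (i : 'I_N) :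
  (s == [ffun j => j == i]) = ([set j | s j] == [set i]).
Proof.
apply/eqP/eqP => [->|H].
  by apply/setP => j; rewrite !inE ffunE.
by apply/ffunP => j; move/setP: H => /(_ j); rewrite !inE ffunE.
Qed.

Lemma eq_ones N (s : bits N) :
  (s == [ffun=> true]) = (#|[set j | s j]| == N).
Proof.
apply/eqP/eqP => [->|H].
  rewrite -[RHS](card_ord N) -cardsT; apply: eq_card => j; by rewrite !inE ffunE.
have /eqP HA : [set j | s j] == setT.
  by rewrite eqEcard subsetT cardsT card_ord H leqnn.
by apply/ffunP => j; move/setP: HA => /(_ j); rewrite !inE ffunE.
Qed.

Lemma sum_single N (s : bits N) :
  \sum_(i < N) (([set j | s j] == [set i])%:R : C) = (#|[set j | s j]| == 1%N)%:R.
Proof.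
have [/cards1P [i0 Hi0]|H1] := boolP (#|[set j | s j]| == 1%N).
  rewrite (bigD1 i0) //= Hi0 eqxx big1 ?addr0 // => i Hi.
  case: eqP => // /setP /(_ i0); rewrite !inE eqxx.
  by rewrite eq_sym (negbTE Hi).
rewrite big1 // => i _; case: eqP => // HA.
by move: H1; rewrite HA cards1.
Qed.

Lemma Xval N (z : C) (s : bits N) : (0 < N)%N ->
  X_state N z s = (#|[set i | s i]| == N)%:R + z ^+ N.-1 * (#|[set i | s i]| == 1%N)%:R.
Proof.
move=> N0.
have sN : sqrtC (N%:R : C) != 0 by rewrite sqrtC_eq0 pnatr_eq0 -lt0n.
rewrite /X_state /W_state /all_ones /ket !ffunE sum_ffunE.
under eq_bigr do rewrite ffunE eq_single.
rewrite sum_single eq_ones /GRing.scale /=.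
by rewrite mulrA -(mulrA _ (sqrtC _)) mulfV // mulr1.
Qed.

Lemma recur (e a : nat) (w r : nat -> C) :
  (forall m, (a <= m < a + e)%N -> \sum_(i < e) w i * r i ^+ m = 0) ->
  \sum_(i < e) w i * r i ^+ (a + e) = 0.
Proof.
elim: e w => [|e IH] w H; first by rewrite big_ord0.
pose w' i := w i * (r i - r e).
have E m : \sum_(i < e) w' i * r i ^+ m =
   \sum_(i < e.+1) w i * r i ^+ m.+1 - r e * \sum_(i < e.+1) w i * r i ^+ m.
  rewrite !big_ord_recr /= mulrDr mulr_sumr.
  have -> : \sum_(i < e) w' i * r i ^+ m =
     \sum_(i < e) w i * r i ^+ m.+1 - \sum_(i < e) r e * (w i * r i ^+ m).
    by rewrite -sumrB; apply: eq_bigr => i _; rewrite /w' exprS; ring.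
  rewrite exprS; ring.
have H' : forall m, (a <= m < a + e)%N -> \sum_(i < e) w' i * r i ^+ m = 0.
  move=> m /andP[am me]; rewrite E !H ?mulr0 ?subr0 //.
    by rewrite am /= addnS ltnS ltnW.
  by rewrite (leq_trans am) //= addnS ltnS.
have := IH w' H'; rewrite E (H (a + e)%N); last by apply/andP; split; lia.
by rewrite mulr0 subr0 addnS.
Qed.

Lemma card_lt N t : (t <= N)%N -> #|[set i : 'I_N | (i < t)%N]| = t.
Proof.
move=> tN.
have -> : [set i : 'I_N | (i < t)%N] = widen_ord tN @: [set: 'I_t].
  apply/setP => i; rewrite !inE; apply/idP/imsetP => [it|[j _ ->]]; last by rewrite /= ltn_ord.
  by exists (Ordinal it) => //; apply: val_inj.
rewrite card_imset ?cardsT ?card_ord // => x y /(congr1 val) /= xy; exact: val_inj.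
Qed.


Lemma part1 N (z : C) : (4 <= N)%N ->
  X_state N z = (N.-1%:R)^-1 *: \sum_(k < N.-1) tpow N (x_vec N z k).
Proof.
move=> N4; set n := N.-1.
have Nn : N = n.+1 by rewrite /n prednK // (leq_trans _ N4).
have n1 : (1 < n)%N by rewrite /n -ltnS -Nn (leq_trans _ N4).
have n0 : (n%:R : C) != 0 by rewrite pnatr_eq0 -lt0n ltnW.
set om := omega C n.
have omE : (n.-root (-1 : C)) ^+ 2 = om by [].
have N1 : (N == 1%N) = false by apply/negbTE/eqP; lia.
have N1' : (1%N == N) = false by apply/negbTE/eqP; lia.
have Nm1 : (N - 1 = n)%N by lia.
have omn : om ^+ n = 1.
  by rewrite /om /omega -exprM mulnC exprM rootCK ?(ltnW n1) // sqrrN expr1n.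
apply/ffunP => s; rewrite Xval ?Nn // ffunE sum_ffunE /GRing.scale /=.
set t := #|[set i | s i]|.
have tN : (t <= N)%N by have := max_card (mem [set i | s i]); rewrite card_ord.
under eq_bigr => k _ do rewrite tpowE !ffunE -/t expr1n mul1r exprMn -exprM mulnC exprM.
rewrite -/n -/om -mulr_suml geo_sum; last by rewrite -exprM mulnC exprM omn expr1n.
have [tEN|tNN] := eqVneq t N.
  by rewrite tEN subnn expr0 N1 eqxx mulr1 mulVf // mulr0 addr0.
have [t1|t1] := eqVneq t 1%N.
  by rewrite t1 Nm1 omn eqxx mulr1 mulKf // add0r.
rewrite /= !mulr0n mulr0 addr0.
case: ifP => [/eqP om1|]; last by rewrite mul0r mulr0.
exfalso.
have c0 : (0 < N - t)%N by rewrite subn_gt0 ltn_neqAle tNN.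
have [cn|cn] := ltnP (N - t) n.
  have Hc : (0 < N - t < n)%N by rewrite c0 cn.
  by have := @omega_ok C n (N - t) n1 Hc; rewrite omE om1 eqxx.
have ct : (N - t = N)%N.
  move: cn t1 tN; rewrite Nn; lia.
move: om1; rewrite ct Nn exprS omn mulr1 => om1.
have Hc : (0 < 1 < n)%N by rewrite n1.
by have := @omega_ok C n 1 n1 Hc; rewrite omE expr1 om1 eqxx.
Qed.

Lemma tpow_scale N (c : C) (x : qubit C) :
  tpow N [ffun b => c * x b] = c ^+ N *: tpow N x.
Proof.
apply/ffunP => s; rewrite !ffunE.
under eq_bigr do rewrite ffunE.
by rewrite big_split /= prodr_const card_ord.
Qed.

Lemma pow_aux (p q : C) k m : (0 < k)%N ->
  p ^+ k * q ^+ m = p ^+ (k + m) * (q / p) ^+ m.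
Proof.
move=> k0; have [->|p0] := eqVneq p 0.
  have k0' : (k == 0%N) = false by case: (k) k0.
  have km : (k + m == 0)%N = false by case: (k) k0.
  by rewrite !expr0n k0' km !mul0r.
rewrite exprMn exprVn exprD -!mulrA; congr (_ * _).
by rewrite mulrCA mulfV ?mulr1 // expf_neq0.
Qed.

Lemma lower N (z : C) : (4 <= N)%N -> z != 0 -> forall D, (1 <= D)%N ->
  sum_of_tpows (X_state N z) D -> (N.-1 <= D)%N.
Proof.
move=> N4 z0 [//|D'] _ [xs Hxs].
rewrite leqNgt; apply/negP => Dn.
set n := N.-1 in Dn *.
have Nn : N = n.+1 by rewrite /n prednK // (leq_trans _ N4).
pose a (i : nat) := xs (inord i) true; pose b (i : nat) := xs (inord i) false.
pose W i := a i ^+ N; pose R i := b i / a i.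
have dval m : (0 < m < N)%N -> \sum_(i < D'.+1) W i * R i ^+ m =
   X_state N z [ffun j : 'I_N => (j < N - m)%N].
  move=> /andP[m0 mN]; rewrite Hxs sum_ffunE; apply: eq_bigr => i _.
  rewrite tpowE.
  have -> : [set j | [ffun j : 'I_N => (j < N - m)%N] j] = [set j : 'I_N | (j < N - m)%N].
    by apply/setP => j; rewrite !inE ffunE.
  rewrite card_lt ?leq_subr // subKn ?(ltnW mN) //.
  by rewrite /W /R /a /b inord_val [RHS]pow_aux ?subn_gt0 // subnK // ltnW.
have Xs m : (0 < m < N)%N -> X_state N z [ffun j : 'I_N => (j < N - m)%N] =
   ((N - m)%N == N)%:R + z ^+ N.-1 * ((N - m)%N == 1%N)%:R.
  move=> /andP[m0 mN]; rewrite Xval; last by rewrite (leq_trans _ N4).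
  have -> : [set j | [ffun j : 'I_N => (j < N - m)%N] j] = [set j : 'I_N | (j < N - m)%N].
    by apply/setP => j; rewrite !inE ffunE.
  by rewrite card_lt ?leq_subr.
have Hrec : forall m, (n - D'.+1 <= m < n - D'.+1 + D'.+1)%N ->
    \sum_(i < D'.+1) W i * R i ^+ m = 0.
  move=> m /andP[m1 m2].
  have Hm : (0 < m < N)%N by apply/andP; split; lia.
  rewrite dval // Xs //.
  have -> : ((N - m)%N == N) = false by apply/negbTE/eqP; lia.
  have -> : ((N - m)%N == 1%N) = false by apply/negbTE/eqP; lia.
  by rewrite /= !mulr0n mulr0 addr0.
have := @recur (D'.+1) (n - D'.+1) W R Hrec.
have Hn : (0 < n < N)%N by apply/andP; split; lia.
rewrite subnK ?(ltnW Dn) // dval // Xs //.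
have -> : ((N - n)%N == N) = false by apply/negbTE/eqP; lia.
have -> : ((N - n)%N == 1%N) = true by apply/eqP; lia.
rewrite /= mulr0n add0r mulr1 => /eqP; by rewrite expf_eq0 (negbTE z0) andbF.
Qed.

End Main.

Theorem mainTheorem11 (C : numClosedFieldType) (N : nat) (z : C) :
  (4 <= N)%N -> z != 0 ->
  X_state N z = (N.-1%:R)^-1 *: \sum_(k < N.-1) tpow N (x_vec N z k)
  /\ optimal_bond_dim (X_state N z) N.-1.
Proof.
move=> N4 z0; split; first exact: part1.
have N0 : (0 < N)%N by rewrite (leq_trans _ N4).
split.
- by rewrite -ltnS prednK // (leq_trans _ N4).
- pose cc := N.-root ((N.-1%:R : C)^-1).
  exists (fun k => [ffun b => cc * x_vec N z k b]).
  rewrite part1 //.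
  under [RHS]eq_bigr do rewrite tpow_scale.
  by rewrite -scaler_sumr /cc rootCK.
- exact: lower.
Qed.
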